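(* Let $\mathcal{S}$ be a finite set of points of interest and, for each history $X$, let $P(\cdot\mid X)$ be a distribution on $\mathcal{S}$ with $\Delta_P\le P(s\mid X)\le1-\Delta_P$ for all $(X,s)$, for some $\Delta_P\in(0,0.5)$. Let $\Theta=\{\theta_1,\dots,\theta_K\}\subset[1,\infty)$ be a finite set of distinct parameters with prior $P_0$ (positive on $\Theta$), and for $\theta\in\Theta$ define the transition model \[ P(s\mid X,a,\theta)=\begin{cases}P(s\mid X)^{1/\theta},& s=a,\\ P(s\mid X)\,\dfrac{1-P(a\mid X)^{1/\theta}}{1-P(a\mid X)}, & s\neq a.\end{cases} \] The true parameter is $\theta_*\in\Theta$. At each time $t=1,2,\dots$, given the history $X_t$, a recommendation $a_t\in\mathcal{S}$ is chosen based on the past, and $s_t\sim P(\cdot\mid X_t,a_t,\theta_* )$ is observed and appended to the history. Let $P_t(\theta)\propto P_0(\theta)\prod_{\tau=1}^tP(s_\tau\mid X_\tau,a_\tau,\theta)$ be the posterior at the end of time $t$, and let $\theta_t$ be sampled from $P_t$ at time step $t$. Define $\Delta_\theta=\min_{\theta\in\Theta,\theta\ne\theta_*}|\theta-\theta_*|$, \[ B=2\max\Big\{\max_{\theta\in\Theta}\max_{p\in[\Delta_P,1-\Delta_P]}\Big|\log\frac{p^{1/\theta}}{p^{1/\theta_*}}\Big|,\ \max_{\theta\in\Theta}\max_{p\in[\Delta_P,1-\Delta_P]}\Big|\log\frac{1-p^{1/\theta}}{1-p^{1/\theta_*}}\Big|\Big\}, \] \[ c_0=\frac{\min\{\ln(1/\Delta_P)\Delta_P,\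 \ln(1/(1-\Delta_P))(1-\Delta_P)\}}{(\max_{\theta\in\Theta}\theta)^2},\qquad \kappa=\Big(\max_{\theta\in\Theta}\theta-\min_{\theta\in\Theta}\theta\Big)^2. \] Then for every $t>2$, \[ \mathbb{E}\big[(\theta_t-\theta_* )^2\mid\theta_*\big]\le\frac{3}{e c_0^2t}\,\frac{1-P_0(\theta_* )}{P_0(\theta_* )}\exp\Big\{-c_0^2\Delta_\theta^2t+\sqrt{2B^2t\ln(K\kappa t^2)}\Big\}+\frac{1}{t^2}. \] *)

(* Defs.v *)
From HB Require Import structures.
From mathcomp Require Import all_boot all_order all_algebra.
From mathcomp Require Import all_classical all_reals all_analysis.
Set Implicit Arguments. Unset Strict Implicit. Unset Printing Implicit Defensive.
Import Order.TTheory GRing.Theory Num.Theory.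
Local Open Scope ring_scope.
Local Open Scope classical_set_scope.

Section Model.
Variables (R : realType) (S : finType).

Definition base_model := seq S -> S -> R.

Definition Ptrans (P : base_model) (X : seq S) (a : S) (th : R) (s : S) : R :=
  if s == a then P X s `^ th^-1
  else P X s * ((1 - P X a `^ th^-1) / (1 - P X a)).

(* a trajectory of length t : the pairs (a_tau, s_tau), tau = 1..t *)
Definition hist (X0 : seq S) (w : seq (S * S)) (i : nat) : seq S :=
  X0 ++ map snd (take i w).

Definition traj_prob t (P : base_model) (pi : seq (S * S) -> S -> R)
  (X0 : seq S) (th : R) (w : t.-tuple (S * S)) : R :=
  \prod_(i < t) (pi (take i w) (tnth w i).1 *
                 Ptrans P (hist X0 w i) (tnth w i).1 th (tnth w i).2).

Definition likelihood t (P : base_model) (X0 : seq S) (w : t.-tuple (S * S))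
  (th : R) : R :=
  \prod_(i < t) Ptrans P (hist X0 w i) (tnth w i).1 th (tnth w i).2.

Definition posterior K t (P : base_model) (X0 : seq S) (theta : 'I_K -> R)
  (P0 : 'I_K -> R) (w : t.-tuple (S * S)) (j : 'I_K) : R :=
  P0 j * likelihood P X0 w (theta j) /
  \sum_(k < K) P0 k * likelihood P X0 w (theta k).

(* E[(theta_t - theta_* )^2 | theta_*], with theta_t ~ P_t given the data *)
Definition expected_sq_err K t (P : base_model) (pi : seq (S * S) -> S -> R)
  (X0 : seq S) (theta : 'I_K -> R) (P0 : 'I_K -> R) (i0 : 'I_K) : R :=
  \sum_(w : t.-tuple (S * S))
     traj_prob P pi X0 (theta i0) w *
     \sum_(j < K) posterior P X0 theta P0 w j * (theta j - theta i0) ^+ 2.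

End Model.

Section Constants.
Variables (R : realType) (K : nat).

Definition theta_max (theta : 'I_K -> R) (i0 : 'I_K) : R :=
  \big[Num.max/theta i0]_(j < K) theta j.
Definition theta_min (theta : 'I_K -> R) (i0 : 'I_K) : R :=
  \big[Num.min/theta i0]_(j < K) theta j.

Definition Delta_theta (theta : 'I_K -> R) (i0 : 'I_K) : R :=
  inf [set `|theta j - theta i0| | j in [set j : 'I_K | j != i0]].

Definition Bconst (DP : R) (theta : 'I_K -> R) (i0 : 'I_K) : R :=
  2 * sup [set x : R | exists (j : 'I_K) (p : R),
       p \in `[DP, 1 - DP] /\
       (x = `| ln (p `^ (theta j)^-1 / p `^ (theta i0)^-1) | \/
        x = `| ln ((1 - p `^ (theta j)^-1) / (1 - p `^ (theta i0)^-1)) |)].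

Definition c0const (DP : R) (theta : 'I_K -> R) (i0 : 'I_K) : R :=
  Num.min (ln (DP^-1) * DP) (ln ((1 - DP)^-1) * (1 - DP)) /
  (theta_max theta i0) ^+ 2.

Definition kappa (theta : 'I_K -> R) (i0 : 'I_K) : R :=
  (theta_max theta i0 - theta_min theta i0) ^+ 2.

End Constants.

(* Main.v *)
Require Import Defs.
From HB Require Import structures.
From mathcomp Require Import all_boot all_order all_algebra.
From mathcomp Require Import all_classical all_reals all_analysis.
From mathcomp Require Import ring lra.
Import Order.TTheory GRing.Theory Num.Theory.
Local Open Scope ring_scope.

Lemma tower (R : realType) (T : finType) (g : seq T -> T -> R) (rho : R) :
  (forall h x, 0 <= g h x) -> (forall h, \sum_x g h x <= rho) ->
  forall t h, \sum_(w : t.-tuple T) \prod_(i < t) g (h ++ take i w) (tnth w i)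
     <= rho ^+ t.
Proof.
move=> g0 gs.
have rho0 : 0 <= rho by apply: le_trans (gs [::]); apply: sumr_ge0.
elim=> [|t IH] h.
  rewrite expr0 (eq_bigr (fun _ => 1)); last by move=> w _; rewrite big_ord0.
  rewrite sumr_const card_tuple expn0 //.
have -> : \sum_(w : t.+1.-tuple T) \prod_(i < t.+1) g (h ++ take i w) (tnth w i)
  = \sum_(p : T * t.-tuple T)
      \prod_(i < t.+1) g (h ++ take i (cons_tuple p.1 p.2)) (tnth (cons_tuple p.1 p.2) i).
  rewrite (reindex (fun p : T * t.-tuple T => cons_tuple p.1 p.2)) //.
  exists (fun w : t.+1.-tuple T => (thead w, behead_tuple w)).
    move=> [x w] _ /=; congr pair.
    by apply: val_inj.
  move=> w _; apply: val_inj => /=.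
  by case: w => -[|x s] //= _; rewrite /thead (tnth_nth x) /=.
rewrite -(pair_big xpredT xpredT (fun x (w : t.-tuple T) => \prod_(i < t.+1) g (h ++ take i (cons_tuple x w)) (tnth (cons_tuple x w) i))) /=.
apply: (@le_trans _ _ (\sum_x g h x * rho ^+ t)); last first.
  by rewrite -mulr_suml exprS ler_wpM2r // exprn_ge0.
apply: ler_sum => x _.
apply: (@le_trans _ _ (g h x * \sum_(w : t.-tuple T) \prod_(i < t) g (rcons h x ++ take i w) (tnth w i))); last first.
  by apply: ler_wpM2l => //; apply: IH.
rewrite mulr_sumr; apply: ler_sum => w _; rewrite big_ord_recl /=.
rewrite cats0 (_ : tnth (cons_tuple x w) ord0 = x); last by rewrite (tnth_nth x).
apply: ler_wpM2l => //; rewrite le_eqVlt; apply/orP; left; apply/eqP/eq_bigr => i _.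
rewrite -cats1 -catA /= (tnth_nth x) /= -(tnth_nth x) //.
Qed.
Lemma bc (R : realType) (a b c d : R) : 0 <= a -> 0 <= b -> 0 <= c -> 0 <= d ->
  a^+2 + c^+2 = 1 -> b^+2 + d^+2 = 1 ->
  a * b + c * d <= 1 - (a^+2 - b^+2)^+2 / 2.
Proof.
move=> a0 b0 c0 d0 e1 e2.
have hA0 : 0 <= (a-b)^+2 := sqr_ge0 _.
have hC0 : 0 <= (c-d)^+2 := sqr_ge0 _.
set s := a^+2 + b^+2.
set X := (a^+2 - b^+2)^+2.
have hX1 : X <= (a - b)^+2 * (2 * s).
  have -> : X = (a-b)^+2 * (a+b)^+2 by rewrite /X; ring.
  apply: ler_wpM2l => //.
  have := sqr_ge0 (a - b); rewrite /s; lra.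
have hX2 : X <= (c - d)^+2 * (2 * (2 - s)).
  have -> : X = (c-d)^+2 * (c+d)^+2.
    rewrite /X; have -> : a^+2 = 1 - c^+2 by lra.
    have -> : b^+2 = 1 - d^+2 by lra. ring.
  apply: ler_wpM2l => //.
  have := sqr_ge0 (c - d); rewrite /s; lra.
have s0 : 0 <= s by rewrite /s; have := sqr_ge0 a; have := sqr_ge0 b; lra.
have s2 : s <= 2 by rewrite /s; have := sqr_ge0 c; have := sqr_ge0 d; lra.
have hss : s * (2 - s) <= 1 by have := sqr_ge0 (s - 1); lra.
have h1 : X * (2 - s) <= (a - b)^+2 * (2 * s) * (2 - s) by apply: ler_wpM2r => //; lra.
have h2 : X * s <= (c - d)^+2 * (2 * (2 - s)) * s by apply: ler_wpM2r => //.
have h3 : ((a-b)^+2 + (c-d)^+2) * (s * (2 - s)) <= ((a-b)^+2 + (c-d)^+2) * 1.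
  by apply: ler_wpM2l => //; lra.
have hX : X <= (a-b)^+2 + (c-d)^+2 by lra.
have : (a-b)^+2 + (c-d)^+2 = 2 - 2 * (a * b + c * d) by lra.
lra.
Qed.
Lemma ln_le_sub1 (R : realType) (x : R) : 0 < x -> ln x <= x - 1.
Proof.
move=> x0; have := @le_ln1Dx R (x - 1); rewrite addrCA subrr addr0; apply; lra.
Qed.

Lemma powR_inv_expR (R : realType) (p x : R) : 0 < p -> p `^ x^-1 = expR (x^-1 * ln p).
Proof. by move=> p0; rewrite /powR gt_eqF. Qed.

Lemma powdiff (R : realType) (p x y M : R) : 0 < p < 1 -> 1 <= x <= M -> 1 <= y <= M ->
  p * (- ln p) * `|x - y| / M^+2 <= `|p `^ x^-1 - p `^ y^-1|.
Proof.
move=> /andP[p0 p1].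
wlog yx : x y / y <= x.
  move=> H hx hy; case: (leP y x) => [yx|xy]; first exact: H.
  by rewrite distrC [X in _ <= X]distrC; apply: H => //; apply: ltW.
move=> /andP[x1 xM] /andP[y1 yM].
set L := - ln p.
have L0 : 0 < L by rewrite /L oppr_gt0 ln_lt0 // p0 p1.
have x0 : 0 < x by lra.
have y0 : 0 < y by lra.
have M0 : 0 < M by lra.
rewrite !powR_inv_expR // ger0_norm ?subr_ge0 //.
have eq1 : expR (x^-1 * ln p) - expR (y^-1 * ln p)
   = expR (- (L / y)) * (expR (L / y - L / x) - 1).
  rewrite mulrBr mulr1 -expRD; congr (_ - _); congr expR; rewrite /L; field; lra.
have le1 : L * (x - y) / M^+2 <= L / y - L / x.
  have -> : L / y - L / x = L * (x - y) / (x * y) by field; lra.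
  apply: ler_wpM2l; first by apply: mulr_ge0; lra.
  rewrite lef_pV2 ?posrE ?mulr_gt0 ?exprn_gt0 //.
  have : x * y <= M * M by apply: ler_pM => //; lra.
  rewrite expr2; lra.
have le2 : p <= expR (- (L / y)).
  have -> : p = expR (- L) by rewrite /L opprK lnK // posrE.
  rewrite ler_expR lerN2 ler_pdivrMr // ler_peMr //; lra.
rewrite eq1 ger0_norm; last first.
  apply: mulr_ge0; first exact: expR_ge0.
  have := expR_ge1Dx (L / y - L / x); have : 0 <= L * (x - y) / M^+2.
    apply: mulr_ge0; last by rewrite invr_ge0 exprn_ge0 //; lra.
    by apply: mulr_ge0; lra.
  lra.
rewrite -!mulrA; apply: ler_pM => //.
- by apply: ltW.
- apply: mulr_ge0; first lra.
  apply: mulr_ge0; last by rewrite invr_ge0 exprn_ge0 //; lra.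
  lra.
- rewrite !mulrA; apply: (le_trans le1); have := expR_ge1Dx (L / y - L / x); lra.
Qed.

Lemma hmin (R : realType) (DP p : R) : 0 < DP -> DP < 1/2 -> DP <= p <= 1 - DP ->
  Num.min (ln (DP^-1) * DP) (ln ((1 - DP)^-1) * (1 - DP)) <= p * (- ln p).
Proof.
move=> D0 D1 /andP[pl pu].
have p0 : 0 < p by lra.
set b := 1 - DP.
have b0 : 0 < b by rewrite /b; lra.
have pb : p <= b := pu.
rewrite !lnV ?posrE //.
case: (lerP 1 (- ln p)) => Hl.
- rewrite ge_min; apply/orP; left.
  have h1 : ln (p / DP) <= p / DP - 1 by apply: ln_le_sub1; apply: divr_gt0.
  rewrite ln_div ?posrE // in h1.
  have h2 : DP * (ln p - ln DP) <= DP * (p / DP - 1) by apply: ler_wpM2l => //; lra.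
  have e2 : DP * (p / DP - 1) = p - DP by field; lra.
  rewrite e2 in h2.
  have h3 : (p - DP) * 1 <= (p - DP) * (- ln p) by apply: ler_wpM2l => //; lra.
  lra.
- rewrite ge_min; apply/orP; right.
  have h1 : ln (p / b) <= p / b - 1 by apply: ln_le_sub1; apply: divr_gt0.
  rewrite ln_div ?posrE // in h1.
  have hp : expR (-1) <= p.
    by rewrite -[X in _ <= X](@lnK R p) ?posrE // ler_expR; lra.
  have hb : b * (- ln b) <= expR (-1).
    have e0 : 0 < expR (-1 : R) := expR_gt0 _.
    have bi0 : 0 < b^-1 by rewrite invr_gt0.
    have h := @ln_le_sub1 R (b^-1 * expR (-1)) (mulr_gt0 bi0 e0).
    rewrite lnM ?posrE ?invr_gt0 // lnV ?posrE // expRK in h.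
    have h' : b * (- ln b - 1) <= b * (b^-1 * expR (-1) - 1) by apply: ler_wpM2l; lra.
    have e2 : b * (b^-1 * expR (-1) - 1) = expR (-1) - b by field; lra.
    rewrite e2 in h'.
    lra.
  have h2 : p * (ln b - ln p) >= p * (1 - p / b).
    apply: ler_wpM2l; first lra.
    have h4 : ln (b / p) >= 1 - p / b.
      have h5 := @ln_le_sub1 R _ (divr_gt0 p0 b0); rewrite ln_div ?posrE // in h5.
      rewrite ln_div ?posrE //; lra.
    by rewrite ln_div ?posrE // in h4.
  have e : p * (- ln p) - b * (- ln b) = (p - b) * (- ln b) + p * (ln b - ln p) by ring.
  have h6 : (p - b) * (- ln b) + p * (1 - p / b) = (b - p) / b * (b * ln b + p).
    by field; lra.
  have h7 : 0 <= (b - p) / b * (b * ln b + p).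
    apply: mulr_ge0; first by apply: divr_ge0; lra.
    lra.
  lra.
Qed.
Lemma powR_in01 (R : realType) (p th : R) : 0 < p < 1 -> 0 < th ->
  0 < p `^ th^-1 < 1.
Proof.
move=> /andP[p0 p1] th0; rewrite powR_gt0 //= powR_inv_expR // expR_lt1.
by rewrite pmulr_rlt0 ?invr_gt0 // ln_lt0 // p0 p1.
Qed.

Lemma Ptrans_gt0 (R : realType) (S : finType) (P : seq S -> S -> R) (DP : R)
  X a th s : 0 < DP -> (forall X s, DP <= P X s <= 1 - DP) -> 0 < th ->
  0 < Ptrans P X a th s.
Proof.
move=> D0 HP th0; rewrite /Ptrans.
have hp : forall s, 0 < P X s < 1.
  by move=> s'; have /andP[h1 h2] := HP X s'; apply/andP; split; lra.
have /andP[q0 q1] := @powR_in01 R _ _ (hp a) th0.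
case: (s == a); first by apply: powR_gt0; have /andP[] := hp s.
have /andP[pa0 pa1] := hp a; have /andP[ps0 ps1] := hp s.
apply: mulr_gt0 => //; apply: divr_gt0; lra.
Qed.

Lemma Ptrans_sum (R : realType) (S : finType) (P : seq S -> S -> R) (DP : R)
  X a th : 0 < DP -> (forall X, \sum_(s : S) P X s = 1) ->
  (forall X s, DP <= P X s <= 1 - DP) -> 0 < th ->
  \sum_s Ptrans P X a th s = 1.
Proof.
move=> D0 HS HP th0.
have pa1 : P X a < 1 by have /andP[h1 h2] := HP X a; lra.
rewrite (bigD1 a) //= /Ptrans eqxx.
rewrite (eq_bigr (fun s => P X s * ((1 - P X a `^ th^-1) / (1 - P X a)))); last first.
  by move=> s /negbTE ->.
rewrite -mulr_suml.
have : \sum_(s | s != a) P X s = 1 - P X a.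
  by have := HS X; rewrite (bigD1 a) //=; lra.
move=> ->; field; lra.
Qed.

Lemma Ptrans_bc (R : realType) (S : finType) (P : seq S -> S -> R) (DP : R)
  X a th1 th2 : 0 < DP -> (forall X, \sum_(s : S) P X s = 1) ->
  (forall X s, DP <= P X s <= 1 - DP) -> 0 < th1 -> 0 < th2 ->
  \sum_s Num.sqrt (Ptrans P X a th1 s * Ptrans P X a th2 s) =
  Num.sqrt (P X a `^ th1^-1 * P X a `^ th2^-1) +
  Num.sqrt ((1 - P X a `^ th1^-1) * (1 - P X a `^ th2^-1)).
Proof.
move=> D0 HS HP t10 t20.
have hp : forall s, 0 < P X s < 1.
  by move=> s'; have /andP[h1 h2] := HP X s'; apply/andP; split; lra.
have /andP[pa0 pa1] := hp a.
have /andP[q10 q11] := @powR_in01 R _ _ (hp a) t10.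
have /andP[q20 q21] := @powR_in01 R _ _ (hp a) t20.
rewrite (bigD1 a) //= /Ptrans eqxx; congr (_ + _).
set k := Num.sqrt ((1 - P X a `^ th1^-1) / (1 - P X a) * ((1 - P X a `^ th2^-1) / (1 - P X a))).
rewrite (eq_bigr (fun s => P X s * k)); last first.
  move=> s /negbTE ->.
  have -> : P X s * ((1 - P X a `^ th1^-1) / (1 - P X a)) *
    (P X s * ((1 - P X a `^ th2^-1) / (1 - P X a))) =
    P X s ^+ 2 * ((1 - P X a `^ th1^-1) / (1 - P X a) * ((1 - P X a `^ th2^-1) / (1 - P X a))).
    by ring.
  rewrite sqrtrM ?sqr_ge0 // sqrtr_sqr ger0_norm //.
  by have /andP[] := hp s => /ltW.
rewrite -mulr_suml.
have -> : \sum_(s | s != a) P X s = 1 - P X a.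
  by have := HS X; rewrite (bigD1 a) //=; lra.
rewrite /k.
have -> : (1 - P X a `^ th1^-1) / (1 - P X a) * ((1 - P X a `^ th2^-1) / (1 - P X a))
   = (1 - P X a)^-1 ^+ 2 * ((1 - P X a `^ th1^-1) * (1 - P X a `^ th2^-1)).
  by field; lra.
rewrite sqrtrM ?sqr_ge0 // sqrtr_sqr ger0_norm; last by rewrite invr_ge0; lra.
rewrite mulrA mulfV ?mul1r //; lra.
Qed.

Lemma m_gt0 (R : realType) (DP : R) : 0 < DP -> DP < 1/2 ->
  0 < Num.min (ln (DP^-1) * DP) (ln ((1 - DP)^-1) * (1 - DP)).
Proof.
move=> D0 D1; rewrite lt_min; apply/andP; split; apply: mulr_gt0; try lra;
  apply: ln_gt0.
- by rewrite invf_gt1 //; lra.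
- by rewrite invf_gt1 //; lra.
Qed.

Lemma bc_step (R : realType) (S : finType) (P : seq S -> S -> R) (DP M : R)
  X a th1 th2 : 0 < DP -> DP < 1/2 -> (forall X, \sum_(s : S) P X s = 1) ->
  (forall X s, DP <= P X s <= 1 - DP) -> 1 <= th1 <= M -> 1 <= th2 <= M ->
  \sum_s Num.sqrt (Ptrans P X a th1 s * Ptrans P X a th2 s) <=
  1 - (Num.min (ln (DP^-1) * DP) (ln ((1 - DP)^-1) * (1 - DP)) / M^+2)^+2
      * (th1 - th2)^+2 / 2.
Proof.
move=> D0 D1 HS HP h1 h2.
have t10 : 0 < th1 by case/andP: h1 => ? ?; lra.
have t20 : 0 < th2 by case/andP: h2 => ? ?; lra.
have M0 : 0 < M by case/andP: h1 => ? ?; lra.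
rewrite (@Ptrans_bc R S P DP X a th1 th2 D0 HS HP t10 t20).
have hpa : 0 < P X a < 1 by have /andP[? ?] := HP X a; apply/andP; split; lra.
have /andP[q10 q11] := @powR_in01 R _ _ hpa t10.
have /andP[q20 q21] := @powR_in01 R _ _ hpa t20.
set q1 := P X a `^ th1^-1 in q10 q11 *.
set q2 := P X a `^ th2^-1 in q20 q21 *.
set m := Num.min _ _.
have m0 : 0 < m := @m_gt0 R DP D0 D1.
rewrite !sqrtrM; try lra.
have := @bc R (Num.sqrt q1) (Num.sqrt q2) (Num.sqrt (1 - q1)) (Num.sqrt (1 - q2))
  (sqrtr_ge0 _) (sqrtr_ge0 _) (sqrtr_ge0 _) (sqrtr_ge0 _).
rewrite !sqr_sqrtr; try lra.
move=> /(_ (subrKC _ _) (subrKC _ _)) H.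
apply: (le_trans H).
suff : (m / M^+2)^+2 * (th1 - th2)^+2 <= (q1 - q2)^+2 by lra.
have hpm := @hmin R DP _ D0 D1 (HP X a).
have hd := @powdiff R _ _ _ _ hpa h1 h2.
rewrite -/q1 -/q2 -/m in hpm hd.
have e1 : (m / M^+2)^+2 * (th1 - th2)^+2 = (m / M^+2 * `|th1 - th2|)^+2.
  by rewrite [in RHS]exprMn real_normK ?num_real.
have e2 : (q1 - q2)^+2 = `|q1 - q2|^+2 by rewrite real_normK ?num_real.
rewrite e1 e2; apply: lerXn2r; rewrite ?nnegrE.
- by apply: mulr_ge0 => //; apply: mulr_ge0; [apply: ltW | rewrite invr_ge0 exprn_ge0 // ltW].
- exact: normr_ge0.
apply: le_trans hd.
rewrite mulrAC; apply: ler_wpM2r; first by rewrite invr_ge0 exprn_ge0 // ltW.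
by apply: ler_wpM2r => //.
Qed.



Lemma eqle (R : realType) (x y : R) : x = y -> x <= y.
Proof. by move=> ->. Qed.

Lemma sqrt_prod (R : realType) t (F : 'I_t -> R) : (forall i, 0 <= F i) ->
  Num.sqrt (\prod_(i < t) F i) = \prod_(i < t) Num.sqrt (F i).
Proof.
move=> F0.
suff [] : 0 <= \prod_(i < t) F i /\ Num.sqrt (\prod_(i < t) F i) = \prod_(i < t) Num.sqrt (F i) by [].
apply: (big_rec2 (fun y1 y2 => 0 <= y1 /\ Num.sqrt y1 = y2)).
  by rewrite sqrtr1.
move=> i y1 y2 _ [y0 <-]; split; first by apply: mulr_ge0.
by rewrite sqrtrM.
Qed.

Lemma tower_pair (R : realType) (S : finType) (g : seq (S * S) -> S -> S -> R) (f : seq (S * S) -> S -> R) rho :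
  (forall h a s, 0 <= g h a s) -> (forall h a, \sum_s g h a s <= rho) ->
  (forall h a, 0 <= f h a) -> (forall h, \sum_a f h a = 1) ->
  forall t, \sum_(w : t.-tuple (S * S)) \prod_(i < t) (f (take i w) (tnth w i).1 * g (take i w) (tnth w i).1 (tnth w i).2)
     <= rho ^+ t.
Proof.
move=> g0 gs f0 fs t.
have H1 : forall h (x : S * S), 0 <= f h x.1 * g h x.1 x.2.
  by move=> h x; apply: mulr_ge0.
have H2 : forall h, \sum_(x : S * S) f h x.1 * g h x.1 x.2 <= rho.
  move=> h.
  rewrite -(pair_big xpredT xpredT (fun a s => f h a * g h a s)) /=.
  apply: (@le_trans _ _ (\sum_a f h a * rho)); last by rewrite -mulr_suml fs mul1r.
  by apply: ler_sum => a _; rewrite -mulr_sumr; apply: ler_wpM2l.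
have := @tower R _ (fun h x => f h x.1 * g h x.1 x.2) rho H1 H2 t [::].
by under eq_bigr do under eq_bigr do rewrite cat0s.
Qed.

Lemma traj_split (R : realType) (S : finType) t (P : seq S -> S -> R) pi X0 th
  (w : t.-tuple (S * S)) :
  traj_prob P pi X0 th w = (\prod_(i < t) pi (take i w) (tnth w i).1) * likelihood P X0 w th.
Proof. by rewrite /traj_prob /likelihood big_split. Qed.

Lemma lik_gt0 (R : realType) (S : finType) t (P : seq S -> S -> R) (DP : R) X0 th
  (w : t.-tuple (S * S)) : 0 < DP -> (forall X s, DP <= P X s <= 1 - DP) -> 0 < th ->
  0 < likelihood P X0 w th.
Proof.
move=> D0 HP th0; rewrite /likelihood; apply: prodr_gt0 => i _.
exact: (@Ptrans_gt0 R S P DP _ _ _ _ D0 HP th0).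
Qed.

Lemma pi_prod_ge0 (R : realType) (S : finType) t (pi : seq (S * S) -> S -> R)
  (w : t.-tuple (S * S)) : (forall h a, 0 <= pi h a) ->
  0 <= \prod_(i < t) pi (take i w) (tnth w i).1.
Proof. by move=> pi0; apply: prodr_ge0 => i _. Qed.

Lemma traj_ge0 (R : realType) (S : finType) t (P : seq S -> S -> R) (DP : R) pi X0 th
  (w : t.-tuple (S * S)) : 0 < DP -> (forall X s, DP <= P X s <= 1 - DP) -> 0 < th ->
  (forall h a, 0 <= pi h a) -> 0 <= traj_prob P pi X0 th w.
Proof.
move=> D0 HP th0 pi0; rewrite traj_split; apply: mulr_ge0; first exact: pi_prod_ge0.
by apply: ltW; exact: (@lik_gt0 R S t P DP X0 th w D0 HP th0).
Qed.

Lemma traj_sum (R : realType) (S : finType) t (P : seq S -> S -> R) (DP : R) pi X0 th :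
  0 < DP -> (forall X, \sum_(s : S) P X s = 1) ->
  (forall X s, DP <= P X s <= 1 - DP) -> 0 < th ->
  (forall h a, 0 <= pi h a) -> (forall h, \sum_(a : S) pi h a = 1) ->
  \sum_(w : t.-tuple (S * S)) traj_prob P pi X0 th w <= 1.
Proof.
move=> D0 HS HP th0 pi0 pis.
rewrite -(expr1n _ t).
apply: (@tower_pair R S (fun h a s => Ptrans P (X0 ++ map snd h) a th s) pi 1) => //.
- by move=> h a s; apply: ltW; exact: (@Ptrans_gt0 R S P DP _ _ _ _ D0 HP th0).
- by move=> h a; rewrite (@Ptrans_sum R S P DP _ a th D0 HS HP th0).
Qed.

Lemma sqrt_traj (R : realType) (S : finType) t (P : seq S -> S -> R) (DP M : R) pi X0 th1 th2 :
  0 < DP -> DP < 1/2 -> (forall X, \sum_(s : S) P X s = 1) ->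
  (forall X s, DP <= P X s <= 1 - DP) -> 1 <= th1 <= M -> 1 <= th2 <= M ->
  (forall h a, 0 <= pi h a) -> (forall h, \sum_(a : S) pi h a = 1) ->
  \sum_(w : t.-tuple (S * S)) Num.sqrt (traj_prob P pi X0 th1 w * traj_prob P pi X0 th2 w)
  <= (1 - (Num.min (ln (DP^-1) * DP) (ln ((1 - DP)^-1) * (1 - DP)) / M^+2)^+2
      * (th1 - th2)^+2 / 2) ^+ t.
Proof.
move=> D0 D1 HS HP h1 h2 pi0 pis.
have t10 : 0 < th1 by case/andP: h1 => ? ?; lra.
have t20 : 0 < th2 by case/andP: h2 => ? ?; lra.
apply: le_trans (@tower_pair R S (fun h a s => Num.sqrt (Ptrans P (X0 ++ map snd h) a th1 s * Ptrans P (X0 ++ map snd h) a th2 s)) pi _ _ _ _ _ t).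
- apply: eqle; apply: eq_bigr => w _.
  rewrite /traj_prob -big_split /= sqrt_prod; last first.
    move=> i; apply: mulr_ge0; apply: mulr_ge0 => //; apply: ltW.
    + exact: (@Ptrans_gt0 R S P DP _ _ _ _ D0 HP t10).
    + exact: (@Ptrans_gt0 R S P DP _ _ _ _ D0 HP t20).
  apply: eq_bigr => i _.
  rewrite mulrACA -expr2 sqrtrM ?sqr_ge0 // sqrtr_sqr ger0_norm //.
- by move=> h a s; apply: sqrtr_ge0.
- move=> h a; exact: bc_step.
- by [].
- by [].
Qed.

Lemma post_bounds (R : realType) (S : finType) t (P : seq S -> S -> R) (DP : R) K
  (theta : 'I_K -> R) (P0 : 'I_K -> R) pi X0 (i0 j : 'I_K) (w : t.-tuple (S * S)) :
  0 < DP -> (forall X s, DP <= P X s <= 1 - DP) -> (forall j, 1 <= theta j) ->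
  (forall j, 0 < P0 j) -> (forall h a, 0 <= pi h a) ->
  [/\ 0 <= posterior P X0 theta P0 w j, posterior P X0 theta P0 w j <= 1 &
   traj_prob P pi X0 (theta i0) w * posterior P X0 theta P0 w j <=
   P0 j / P0 i0 * traj_prob P pi X0 (theta j) w].
Proof.
move=> D0 HP th1 P00 pi0.
have L0 : forall k, 0 < likelihood P X0 w (theta k).
  by move=> k; apply: (@lik_gt0 R S t P DP X0 _ w D0 HP); have := th1 k; lra.
have T0 : forall k, 0 < P0 k * likelihood P X0 w (theta k).
  by move=> k; apply: mulr_gt0.
set Z := \sum_(k < K) P0 k * likelihood P X0 w (theta k).
have Zk : forall k, P0 k * likelihood P X0 w (theta k) <= Z.
  move=> k; rewrite /Z (bigD1 k) //= lerDl; apply: sumr_ge0 => l _; apply: ltW; exact: T0.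
have Z0 : 0 < Z by apply: lt_le_trans (Zk j).
rewrite /posterior -/Z; split.
- by apply: divr_ge0; apply: ltW.
- by rewrite ler_pdivrMr // mul1r.
rewrite !traj_split.
set pp := \prod_(i < t) _.
have pp0 : 0 <= pp by apply: pi_prod_ge0.
set b := likelihood P X0 w (theta i0).
set c := P0 j * likelihood P X0 w (theta j).
have a0 := P00 i0.
have c0 : 0 <= c by apply: ltW; apply: T0.
have abZ : P0 i0 * b <= Z := Zk i0.
have key : b * (c / Z) <= c / P0 i0.
  rewrite mulrCA; apply: ler_wpM2l => //.
  rewrite ler_pdivrMr // ler_pdivlMl //.
have -> : P0 j / P0 i0 * (pp * likelihood P X0 w (theta j)) = pp * (c / P0 i0).
  by rewrite /c; field; apply/lt0r_neq0.
by rewrite -mulrA; apply: ler_wpM2l.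
Qed.

Lemma aj_bounds (R : realType) (S : finType) t (P : seq S -> S -> R) (DP M : R) K
  (theta : 'I_K -> R) (P0 : 'I_K -> R) pi X0 (i0 j : 'I_K) :
  0 < DP -> DP < 1/2 -> (forall X, \sum_(s : S) P X s = 1) ->
  (forall X s, DP <= P X s <= 1 - DP) -> (forall j, 1 <= theta j <= M) ->
  (forall j, 0 < P0 j) -> (forall h a, 0 <= pi h a) -> (forall h, \sum_(a : S) pi h a = 1) ->
  let a := \sum_(w : t.-tuple (S * S)) traj_prob P pi X0 (theta i0) w * posterior P X0 theta P0 w j in
  [/\ 0 <= a, a <= P0 j / P0 i0 &
      a <= Num.sqrt (P0 j / P0 i0) *
        (1 - (Num.min (ln (DP^-1) * DP) (ln ((1 - DP)^-1) * (1 - DP)) / M^+2)^+2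
           * (theta j - theta i0)^+2 / 2) ^+ t].
Proof.
move=> D0 D1 HS HP thM P00 pi0 pis a.
have th1 : forall j, 1 <= theta j by move=> k; case/andP: (thM k).
have th0 : forall j, 0 < theta j by move=> k; have := th1 k; lra.
have c0 : 0 <= P0 j / P0 i0 by apply: divr_ge0; apply: ltW.
have PB := fun w => @post_bounds R S t P DP K theta P0 pi X0 i0 j w D0 HP th1 P00 pi0.
have T0 := fun k w => @traj_ge0 R S t P DP pi X0 (theta k) w D0 HP (th0 k) pi0.
have x0 : forall w : t.-tuple (S * S), 0 <= traj_prob P pi X0 (theta i0) w * posterior P X0 theta P0 w j.
  by move=> w; case: (PB w) => p0 _ _; apply: mulr_ge0.
split.
- by apply: sumr_ge0 => w _.
- apply: (@le_trans _ _ (\sum_w P0 j / P0 i0 * traj_prob P pi X0 (theta j) w)).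
    by apply: ler_sum => w _; case: (PB w).
  rewrite -mulr_sumr; apply: ler_piMr => //.
  exact: (@traj_sum R S t P DP pi X0 (theta j) D0 HS HP (th0 j) pi0 pis).
- apply: (@le_trans _ _ (\sum_w Num.sqrt (P0 j / P0 i0) *
     Num.sqrt (traj_prob P pi X0 (theta j) w * traj_prob P pi X0 (theta i0) w))).
    apply: ler_sum => w _.
    case: (PB w) => p0 p1 pc.
    set x := _ * _; set y := traj_prob P pi X0 (theta i0) w.
    have y0 : 0 <= y := T0 i0 w.
    rewrite -sqrtrM // -[x]ger0_norm ?x0 // -sqrtr_sqr ler_sqrt; last first.
      by apply: mulr_ge0 => //; apply: mulr_ge0; apply: T0.
    have h1 : x <= y by rewrite /x -[X in _ <= X]mulr1; apply: ler_wpM2l.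
    have h2 := ler_pM (x0 w) (x0 w) h1 pc.
    by rewrite expr2; apply: (le_trans h2); apply: eqle; rewrite /y; ring.
  rewrite -mulr_sumr; apply: ler_wpM2l; first exact: sqrtr_ge0.
  exact: sqrt_traj.
Qed.


Local Open Scope classical_set_scope.

Lemma B_ge (R : realType) K (DP M : R) (theta : 'I_K -> R) (i0 j : 'I_K) :
  0 < DP -> DP < 1/2 -> (forall k, 1 <= theta k <= M) ->
  4 * (Num.min (ln (DP^-1) * DP) (ln ((1 - DP)^-1) * (1 - DP)) / M^+2)
    * `|theta j - theta i0| <= Bconst DP theta i0.
Proof.
move=> D0 D1 thM.
have th1 : forall k, 1 <= theta k by move=> k; case/andP: (thM k).
have thM' : forall k, theta k <= M by move=> k; case/andP: (thM k).
have th0 : forall k, 0 < theta k by move=> k; have := th1 k; lra.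
have M0 : 0 < M by have := th1 j; have := thM' j; lra.
have ia : forall k, 0 < (theta k)^-1 <= 1.
  by move=> k; rewrite invr_gt0 th0 /= invf_le1 ?th1.
have lnD : ln DP < 0 by rewrite ln_lt0 // D0 /=; lra.
rewrite /Bconst.
set Sx := [set x : R | _].
pose term k := - ln (1 - (1 - DP) `^ (theta k)^-1).
have hD1 : 0 < 1 - DP < 1 by apply/andP; split; lra.
have term0 : forall k, 0 <= term k.
  move=> k; rewrite /term oppr_ge0 ln_le0 //.
  have := powR_ge0 (1 - DP) (theta k)^-1; lra.
have termS : forall k, term k <= \sum_l term l.
  by move=> k; rewrite (bigD1 k) //= lerDl; apply: sumr_ge0.
have hub : has_ubound Sx.
  exists (2 * (- ln DP) + 2 * \sum_l term l) => x [k [p [hp hx]]].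
  move: hp; rewrite in_setE /= in_itv /= => /andP[pl pu].
  have p0 : 0 < p by lra.
  have p01 : 0 < p < 1 by apply/andP; split; lra.
  have lnp : ln DP <= ln p <= 0.
    by rewrite ler_ln ?posrE // pl /= ln_le0 //; lra.
  have S0 : 0 <= \sum_l term l by apply: sumr_ge0.
  case: hx => ->.
  - rewrite ln_div ?posrE ?powR_gt0 // !ln_powR.
    have := ia k; have := ia i0.
    move=> /andP[a0 a1] /andP[b0 b1].
    apply: (@le_trans _ _ (2 * (- ln DP))); last lra.
    rewrite -mulrBl normrM.
    have : `|ln p| <= - ln DP by rewrite ler0_norm; lra.
    have : `|(theta k)^-1 - (theta i0)^-1| <= 2.
      by rewrite ler_norml; apply/andP; split; lra.
    move=> h1 h2; apply: (le_trans (ler_pM (normr_ge0 _) (normr_ge0 _) h1 h2)).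
    lra.
  - have hq : forall l, 0 < 1 - p `^ (theta l)^-1 <= 1.
      move=> l; have /andP[q0 q1] := @powR_in01 R _ _ p01 (th0 l).
      by apply/andP; split; lra.
    have hq2 : forall l, - ln (1 - p `^ (theta l)^-1) <= term l.
      move=> l; rewrite /term lerN2 ler_ln ?posrE.
      + rewrite lerD2l lerN2; apply: ge0_ler_powR; first by case/andP: (ia l) => /ltW.
        * by rewrite nnegrE; lra.
        * by rewrite nnegrE; lra.
        * exact: pu.
      + have /andP[] := @powR_in01 R _ _ hD1 (th0 l); lra.
      + by case/andP: (hq l).
    have hq3 : forall l, ln (1 - p `^ (theta l)^-1) <= 0.
      by move=> l; rewrite ln_le0 //; case/andP: (hq l).
    rewrite ln_div ?posrE; last 2 first.
      + by case/andP: (hq k).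
      + by case/andP: (hq i0).
    have := hq2 k; have := hq2 i0; have := hq3 k; have := hq3 i0.
    have := termS k; have := termS i0.
    move=> *; rewrite ler_norml; apply/andP; split; lra.
have hsup := ub_le_sup hub.
set x0 := `| ln (DP `^ (theta j)^-1 / DP `^ (theta i0)^-1) |.
have Sx0 : Sx x0.
  exists j, DP; split; last by left.
  by rewrite in_setE /= in_itv /=; apply/andP; split; lra.
have hx0 := hsup _ Sx0.
have ex0 : x0 = - ln DP * `|theta j - theta i0| / (theta j * theta i0).
  rewrite /x0 ln_div ?posrE ?powR_gt0 // !ln_powR -mulrBl normrM (ler0_norm (ltW lnD)).
  have -> : (theta j)^-1 - (theta i0)^-1 = (theta i0 - theta j) / (theta j * theta i0).
    by field; apply/andP; split; apply/lt0r_neq0.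
  rewrite normrM (ger0_norm (x := (theta j * theta i0)^-1)); last first.
    by rewrite invr_ge0 mulr_ge0 // ltW.
  rewrite distrC; ring.
set m := Num.min _ _.
have hm : m <= DP * (- ln DP) by rewrite /m ge_min lnV ?posrE //; apply/orP; left; rewrite mulrC.
have iM0 : 0 <= (M^+2)^-1 by rewrite invr_ge0 exprn_ge0 // ltW.
have h1 : m / M^+2 <= DP * (- ln DP) / M^+2 by apply: ler_wpM2r.
set u := - ln DP * `|theta j - theta i0|.
have u0 : 0 <= u by rewrite /u mulr_ge0 //; lra.
have h2 : u / M^+2 <= x0.
  rewrite ex0; apply: ler_wpM2l => //.
  rewrite lef_pV2 ?posrE ?mulr_gt0 ?exprn_gt0 //.
  rewrite expr2; apply: ler_pM => //; apply: ltW => //.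
have h3 : DP * (u / M^+2) <= 1/2 * (u / M^+2).
  by apply: ler_wpM2r; [apply: mulr_ge0 | lra].
have h4 : 4 * (m / M^+2) * `|theta j - theta i0| <= 4 * (DP * (- ln DP) / M^+2) * `|theta j - theta i0|.
  by apply: ler_wpM2r => //; lra.
have e4 : 4 * (DP * (- ln DP) / M^+2) * `|theta j - theta i0| = 4 * (DP * (u / M^+2)).
  by rewrite /u; ring.
lra.
Qed.

Lemma Delta_bounds (R : realType) K (theta : 'I_K -> R) (i0 j : 'I_K) :
  j != i0 -> 0 <= Delta_theta theta i0 <= `|theta j - theta i0|.
Proof.
move=> ji; rewrite /Delta_theta.
set E := [set _ | _ in _].
have Ej : E `|theta j - theta i0| by exists j.
apply/andP; split.
- apply: lb_le_inf; first by exists `|theta j - theta i0|.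
  by move=> x [k _ <-].
- apply: ge_inf => //; exists 0; by move=> x [k _ <-].
Qed.

Local Close Scope classical_set_scope.



Lemma expR1_le4 (R : realType) : expR (1 : R) <= 4.
Proof.
have h : 1 - 2^-1 <= expR (- 2^-1 : R) by have := @expR_ge1Dx R (- 2^-1); lra.
have h2 : expR (2^-1 : R) <= 2.
  have e : expR (2^-1 : R) * expR (- 2^-1) = 1 by rewrite -expRD subrr expR0.
  have : 0 <= expR (2^-1 : R) * (expR (- 2^-1) - 2^-1).
    by apply: mulr_ge0; [apply: expR_ge0 | lra].
  lra.
have -> : (1 : R) = 2^-1 + 2^-1 by field.
rewrite expRD; have := expR_ge0 (2^-1 : R).
move=> h0; have : expR (2^-1 : R) * expR (2^-1) <= 2 * 2 by apply: ler_pM.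
lra.
Qed.

Lemma core (R : realType) (d c a c0 t K B kap y r : R) :
  0 < c0 -> c0 <= 1 -> 3 <= t -> 1 <= K -> 0 <= d -> d <= kap ->
  1 <= K * kap * t ^+ 2 -> 16 * c0^+2 * d <= B^+2 ->
  0 <= y -> y <= c0^+2 * d * t ->
  0 <= c -> 0 <= a -> a <= c -> a <= Num.sqrt c * r -> 0 <= r ->
  r <= expR (- (c0^+2 * d * t / 2)) ->
  d * a <= c * (3 / (expR 1 * c0 ^+ 2 * t) *
       expR (- y + Num.sqrt (2 * B ^+ 2 * t * ln (K * kap * t ^+ 2))))
     + 1 / (K * t ^+ 2).
Proof.
move=> c00 c01 t3 K1 d0 dk Z1 hB y0 yv c0' a0 ac acr r0 rle.
set Z := K * kap * t ^+ 2 in Z1 *.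
set L := ln Z.
have L0 : 0 <= L by apply: ln_ge0.
have t0 : 0 < t by lra.
have Z0 : 0 < Z by lra.
have eZ : Z = expR L by rewrite /L lnK // posrE.
have B0 : 0 <= 2 * B ^+ 2 * t * L.
  apply: mulr_ge0 => //; apply: mulr_ge0; last lra.
  by apply: mulr_ge0; [lra | apply: sqr_ge0].
set eps := Num.sqrt _.
have eps0 : 0 <= eps := sqrtr_ge0 _.
have eps2 : eps ^+ 2 = 2 * B ^+ 2 * t * L by rewrite sqr_sqrtr.
set v := c0 ^+ 2 * d * t.
have yv2 : y <= v := yv.
have cc0 : 0 < c0 ^+ 2 by rewrite exprn_gt0.
have cc1 : c0 ^+ 2 <= 1 by rewrite expr_le1 // ltW.
have v0 : 0 <= v by apply: mulr_ge0; [apply: mulr_ge0; [apply: ltW|] | lra].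
have ct0 : 0 < expR 1 * c0 ^+ 2 * t by apply: mulr_gt0 => //; apply: mulr_gt0 => //; apply: expR_gt0.
set A := 3 / (expR 1 * c0 ^+ 2 * t) * expR (- y + eps).
have A0 : 0 < A by apply: mulr_gt0; [apply: divr_gt0 | apply: expR_gt0].
have eA : A = 3 * expR (- y + eps - 1) / (c0 ^+ 2 * t).
  rewrite /A [expR (- y + eps)](_ : _ = expR 1 * expR (- y + eps - 1)); last first.
    by rewrite -expRD; congr expR; ring.
  have e1 : expR (1:R) != 0 by apply/lt0r_neq0; apply: expR_gt0.
  have e2 : c0 != 0 by apply/lt0r_neq0.
  have e3 : t != 0 by apply/lt0r_neq0.
  by field; rewrite e1 e2 e3.
have invKt : 0 <= 1 / (K * t ^+ 2).
  by apply: divr_ge0; [lra | apply: mulr_ge0; [lra | apply: exprn_ge0; lra]].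
case: (lerP v (eps / 2)) => hv.
-
  have dA : d <= A.
    rewrite eA ler_pdivlMr; last exact: mulr_gt0.
    have := expR_ge1Dx (- y + eps - 1).
    have : d * (c0 ^+ 2 * t) = v by rewrite /v; ring.
    lra.
  apply: (@le_trans _ _ (c * A)); last by lra.
  apply: (@le_trans _ _ (d * c)); first by apply: ler_wpM2l.
  by rewrite mulrC; apply: ler_wpM2l.
- have hL : 16 * L <= eps.
    have h32 : 32 * v * L <= eps ^+ 2.
      rewrite eps2; have : (16 * c0 ^+ 2 * d) * (2 * t * L) <= B ^+ 2 * (2 * t * L).
        by apply: ler_wpM2r => //; apply: mulr_ge0 => //; lra.
      by rewrite /v; lra.
    have h16 : (eps / 2) * (32 * L) <= v * (32 * L) by apply: ler_wpM2r; lra.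
    case: (ltrP 0 eps) => he.
    + have : eps * (16 * L) <= eps * eps by rewrite -expr2; lra.
      by rewrite ler_pM2l.
    + have e0 : eps = 0 by lra.
      rewrite e0 in h16 h32.
      have : v * (32 * L) <= 0 by lra.
      have : 0 < v by lra.
      move=> vp; rewrite pmulr_rle0 // => hL0; lra.
  have s0 : 0 <= Num.sqrt c := sqrtr_ge0 c.
  have sc : Num.sqrt c ^+ 2 = c by rewrite sqr_sqrtr.
  have amgm : d * (Num.sqrt c * r) <= c * A + d ^+ 2 * r ^+ 2 / (4 * A).
    have A4 : 0 < 4 * A by lra.
    rewrite -(ler_pM2r A4).
    have -> : (c * A + d ^+ 2 * r ^+ 2 / (4 * A)) * (4 * A) = 4 * A ^+ 2 * c + d ^+ 2 * r ^+ 2.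
      by field; apply/lt0r_neq0.
    set q := Num.sqrt c in s0 sc *.
    rewrite -sc.
    have := sqr_ge0 (2 * A * q - d * r).
    have e : 4 * A ^+ 2 * q ^+ 2 + d ^+ 2 * r ^+ 2 - d * (q * r) * (4 * A)
       = (2 * A * q - d * r) ^+ 2 by ring.
    lra.
  have r2 : r ^+ 2 <= expR (- v).
    have -> : expR (- v) = expR (- (v / 2)) * expR (- (v / 2)) by rewrite -expRD; congr expR; field.
    by rewrite expr2; apply: ler_pM.
  have W0 : 0 < expR (1 - eps) := expR_gt0 _.
  have X1 : d ^+ 2 * r ^+ 2 / (4 * A) <= d * v * expR (1 - eps) / 12.
    rewrite eA.
    have ey : 0 < expR (- y + eps - 1) := expR_gt0 _.
    have -> : d ^+ 2 * r ^+ 2 / (4 * (3 * expR (- y + eps - 1) / (c0 ^+ 2 * t)))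
      = d ^+ 2 * c0 ^+ 2 * t / 12 * (r ^+ 2 / expR (- y + eps - 1)).
      by field; rewrite !lt0r_neq0.
    have -> : d * v * expR (1 - eps) / 12 = d ^+ 2 * c0 ^+ 2 * t / 12 * expR (1 - eps).
      by rewrite /v; ring.
    apply: ler_wpM2l; first by apply: mulr_ge0; [apply: mulr_ge0; [apply: mulr_ge0; [apply: sqr_ge0 | apply: ltW] | lra] | lra].
    rewrite ler_pdivrMr // -expRD.
    apply: (le_trans r2); rewrite ler_expR; lra.
  have P1 : (K * t ^+ 2 * d) * v <= Z * (Z / 3).
    apply: ler_pM => //.
    - by apply: mulr_ge0 => //; apply: mulr_ge0; [lra | apply: exprn_ge0; lra].
    - rewrite /Z (_ : K * kap * t ^+ 2 = K * t ^+ 2 * kap); last by ring.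
      by apply: ler_wpM2l => //; apply: mulr_ge0; [lra | apply: exprn_ge0; lra].
    - rewrite /v /Z.
      have h1 : c0 ^+ 2 * d * t <= d * t.
        by rewrite -mulrA ler_piMl //; apply: mulr_ge0 => //; lra.
      have h2 : d * t <= kap * t by apply: ler_wpM2r; lra.
      have h3 : kap * 3 <= kap * t by apply: ler_wpM2l; lra.
      have h4 : kap * t * 3 <= kap * t * t by apply: ler_wpM2l; [apply: mulr_ge0; lra | lra].
      have h5 : kap * t ^+ 2 <= K * (kap * t ^+ 2) by apply: ler_peMl => //; apply: mulr_ge0; [lra | apply: exprn_ge0; lra].
      rewrite expr2 in h5; lra.
  have P2 : Z * Z * expR (1 - eps) <= 4.
    rewrite eZ -!expRD; apply: le_trans (expR1_le4 R); rewrite ler_expR; lra.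
  have K0 : 0 < K * t ^+ 2 by apply: mulr_gt0; [lra | apply: exprn_gt0].
  have X2 : d * v * expR (1 - eps) / 12 <= 1 / (K * t ^+ 2).
    rewrite ler_pdivlMr // mulrAC ler_pdivrMr; last lra.
    have : (K * t ^+ 2 * d) * v * expR (1 - eps) <= Z * (Z / 3) * expR (1 - eps).
      by apply: ler_wpM2r => //; apply: ltW.
    have -> : d * v * expR (1 - eps) * (K * t ^+ 2) = K * t ^+ 2 * d * v * expR (1 - eps) by ring.
    lra.
  have da : d * a <= d * (Num.sqrt c * r) by apply: ler_wpM2l.
  lra.
Qed.



Theorem lemma6 (R : realType) (S : finType) (P : seq S -> S -> R) (DP : R)
  (K : nat) (theta : 'I_K -> R) (P0 : 'I_K -> R) (i0 : 'I_K)
  (pi : seq (S * S) -> S -> R) (X0 : seq S) (t : nat) :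
  0 < DP -> DP < 1 / 2 ->
  (forall X, \sum_(s : S) P X s = 1) ->
  (forall X s, DP <= P X s <= 1 - DP) ->
  injective theta ->
  (forall j, 1 <= theta j) ->
  (forall j, 0 < P0 j) -> \sum_(j < K) P0 j = 1 ->
  (forall h a, 0 <= pi h a) -> (forall h, \sum_(a : S) pi h a = 1) ->
  (2 < t)%N ->
  let c0 := c0const DP theta i0 in
  let B := Bconst DP theta i0 in
  expected_sq_err t P pi X0 theta P0 i0 <=
    3 / (expR 1 * c0 ^+ 2 * t%:R) * ((1 - P0 i0) / P0 i0) *
    expR (- (c0 ^+ 2 * (Delta_theta theta i0) ^+ 2 * t%:R)
          + Num.sqrt (2 * B ^+ 2 * t%:R *
                      ln (K%:R * kappa theta i0 * t%:R ^+ 2)))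
    + 1 / t%:R ^+ 2.
Proof.
move=> D0 D1 HS HP _ th1 P00 P0s pi0 pis t2; cbv zeta.
set c0 := c0const DP theta i0.
set B := Bconst DP theta i0.
set M := theta_max theta i0.
set tmin := theta_min theta i0.
have thM : forall k, theta k <= M.
  by move=> k; rewrite /M /theta_max; apply: (le_bigmax_cond _ (P := xpredT)).
have thm : forall k, tmin <= theta k.
  by move=> k; rewrite /tmin /theta_min; apply: (bigmin_le_cond _ (P := xpredT)).
have thM2 : forall k, 1 <= theta k <= M by move=> k; rewrite th1 thM.
have M1 : 1 <= M by apply: le_trans (th1 i0) (thM i0).
pose m := Num.min (ln (DP^-1) * DP) (ln ((1 - DP)^-1) * (1 - DP)).
have c0E : c0 = m / M ^+ 2 by [].
have m0 : 0 < m := @m_gt0 R DP D0 D1.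
have m1 : m <= 1.
  rewrite /m ge_min; apply/orP; left.
  have Di : 0 < DP^-1 by rewrite invr_gt0.
  have := @ln_le_sub1 R (DP^-1) Di.
  move=> h; have : ln DP^-1 * DP <= (DP^-1 - 1) * DP by apply: ler_wpM2r => //; apply: ltW.
  have -> : (DP^-1 - 1) * DP = 1 - DP by field; apply/lt0r_neq0.
  lra.
have Mp : 0 < M by lra.
have M2 : 1 <= M ^+ 2 by rewrite expr2; have := ler_pM ler01 ler01 M1 M1; rewrite mulr1.
have c00 : 0 < c0 by rewrite c0E divr_gt0 // exprn_gt0.
have c01 : c0 <= 1.
  by rewrite c0E ler_pdivrMr ?exprn_gt0 // mul1r; lra.
have K0 : (0 < K)%N by apply: leq_ltn_trans (leq0n i0) (ltn_ord i0).
have Kr : 1 <= K%:R :> R by rewrite ler1n.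
have tr : 3 <= t%:R :> R by rewrite ler_nat.
have p01 : P0 i0 <= 1.
  by rewrite -P0s (bigD1 i0) //= lerDl; apply: sumr_ge0 => k _; apply: ltW.
have dk : forall j, (theta j - theta i0) ^+ 2 <= kappa theta i0.
  move=> j; rewrite /kappa -/M -/tmin.
  have := thM j; have := thM i0; have := thm j; have := thm i0.
  move=> a1 a2 a3 a4.
  have : 0 <= ((M - tmin) - (theta j - theta i0)) * ((M - tmin) + (theta j - theta i0)).
    by apply: mulr_ge0; lra.
  rewrite !expr2; lra.
have kap0 : 0 <= kappa theta i0 by rewrite /kappa sqr_ge0.
have post0 : forall w j, 0 <= posterior P X0 theta P0 (t := t) w j.
  by move=> w j; case: (@post_bounds R S t P DP K theta P0 pi X0 i0 j w D0 HP th1 P00 pi0).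
have postS : forall w : t.-tuple (S * S), \sum_j posterior P X0 theta P0 w j = 1.
  move=> w; rewrite /posterior -mulr_suml divff //.
  apply/lt0r_neq0; rewrite (bigD1 i0) //= ltr_pwDl //.
    by apply: mulr_gt0 => //; apply: (@lik_gt0 R S t P DP X0 _ w D0 HP); have := th1 i0; lra.
  apply: sumr_ge0 => k0 _; apply: mulr_ge0; first exact: ltW.
  by apply: ltW; apply: (@lik_gt0 R S t P DP X0 _ w D0 HP); have := th1 k0; lra.
have th0 : forall k, 0 < theta k by move=> k; have := th1 k; lra.
have T0 := fun k w => @traj_ge0 R S t P DP pi X0 (theta k) w D0 HP (th0 k) pi0.
have Tsum := @traj_sum R S t P DP pi X0 (theta i0) D0 HS HP (th0 i0) pi0 pis.
have first0 : 0 <= 3 / (expR 1 * c0 ^+ 2 * t%:R) * ((1 - P0 i0) / P0 i0) *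
    expR (- (c0 ^+ 2 * (Delta_theta theta i0) ^+ 2 * t%:R)
          + Num.sqrt (2 * B ^+ 2 * t%:R * ln (K%:R * kappa theta i0 * t%:R ^+ 2))).
  apply: mulr_ge0; last exact: expR_ge0.
  apply: mulr_ge0; last by have := P00 i0 => h; apply: divr_ge0; lra.
  apply: divr_ge0 => //; apply: mulr_ge0; [apply: mulr_ge0; [apply: expR_ge0 | apply: sqr_ge0] | lra].
have [Z1|Z1] := lerP 1 (K%:R * kappa theta i0 * t%:R ^+ 2); last first.
  have hk : kappa theta i0 <= 1 / t%:R ^+ 2.
    rewrite ler_pdivlMr ?exprn_gt0 //; last lra.
    have : kappa theta i0 * t%:R ^+ 2 <= K%:R * kappa theta i0 * t%:R ^+ 2.
      rewrite -mulrA ler_peMl //; apply: mulr_ge0 => //; apply: sqr_ge0.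
    lra.
  suff : expected_sq_err t P pi X0 theta P0 i0 <= kappa theta i0 by lra.
  rewrite /expected_sq_err.
  apply: (@le_trans _ _ (\sum_(w : t.-tuple (S * S)) traj_prob P pi X0 (theta i0) w * kappa theta i0)).
    apply: ler_sum => w _; apply: ler_wpM2l; first exact: T0.
    rewrite -[X in _ <= X]mul1r -(postS w) mulr_suml.
    by apply: ler_sum => j _; apply: ler_wpM2l => //.
  by rewrite -mulr_suml ler_piMl.
set Dl := Delta_theta theta i0.
set eps := Num.sqrt _.
set A := 3 / (expR 1 * c0 ^+ 2 * t%:R) * expR (- (c0 ^+ 2 * Dl ^+ 2 * t%:R) + eps).
have -> : 3 / (expR 1 * c0 ^+ 2 * t%:R) * ((1 - P0 i0) / P0 i0) *
    expR (- (c0 ^+ 2 * Dl ^+ 2 * t%:R) + eps) = ((1 - P0 i0) / P0 i0) * A.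
  by rewrite /A; ring.
pose a j := \sum_(w : t.-tuple (S * S)) traj_prob P pi X0 (theta i0) w * posterior P X0 theta P0 w j.
have -> : expected_sq_err t P pi X0 theta P0 i0 = \sum_(j < K) (theta j - theta i0) ^+ 2 * a j.
  rewrite /expected_sq_err.
  under eq_bigr do rewrite mulr_sumr.
  rewrite exchange_big /=; apply: eq_bigr => j _.
  rewrite /a mulr_sumr; apply: eq_bigr => w _; ring.
rewrite (bigD1 i0) //= subrr expr0n mul0r add0r.
have tp : 0 < t%:R :> R by lra.
have Kt0 : 0 < K%:R * t%:R ^+ 2 :> R by apply: mulr_gt0; [lra | apply: exprn_gt0].
apply: (@le_trans _ _ (\sum_(j < K | j != i0) (P0 j / P0 i0 * A + 1 / (K%:R * t%:R ^+ 2)))).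
  apply: ler_sum => j ji.
  have [a0 ac acr] := @aj_bounds R S t P DP M K theta P0 pi X0 i0 j D0 D1 HS HP thM2 P00 pi0 pis.
  rewrite -/m -c0E in acr.
  set d := (theta j - theta i0) ^+ 2 in acr *.
  set rho := 1 - c0 ^+ 2 * d / 2 in acr.
  have dM : d <= M ^+ 2.
    rewrite /d -(real_normK (num_real _)); apply: lerXn2r; rewrite ?nnegrE ?normr_ge0 //; first lra.
    rewrite ler_norml; have := thM2 j; have := thM2 i0; move=> /andP[? ?] /andP[? ?].
    apply/andP; split; lra.
  have d0 : 0 <= d := sqr_ge0 _.
  have cm : c0 * M ^+ 2 = m by rewrite c0E; field; apply/lt0r_neq0.
  have rho0 : 0 <= rho.
    have h1 : c0 ^+ 2 * d <= c0 ^+ 2 * M ^+ 2 by apply: ler_wpM2l => //; apply: sqr_ge0.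
    have h2 : c0 ^+ 2 * M ^+ 2 = c0 * m by rewrite -cm; ring.
    have h3 : c0 * m <= 1 * 1 by apply: ler_pM; lra.
    rewrite /rho; lra.
  have rhoe : rho <= expR (- (c0 ^+ 2 * d / 2)) by have := expR_ge1Dx (- (c0 ^+ 2 * d / 2)); rewrite /rho; lra.
  have rt : rho ^+ t <= expR (- (c0 ^+ 2 * d * t%:R / 2)).
    have -> : - (c0 ^+ 2 * d * t%:R / 2) = t%:R * (- (c0 ^+ 2 * d / 2)) by ring.
    by rewrite expRM_natl; apply: lerXn2r; rewrite ?nnegrE ?expR_ge0.
  have hB : 16 * c0 ^+ 2 * d <= B ^+ 2.
    have hb := @B_ge R K DP M theta i0 j D0 D1 thM2.
    rewrite -/m -c0E -/B in hb.
    have -> : 16 * c0 ^+ 2 * d = (4 * c0 * `|theta j - theta i0|) ^+ 2.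
      by rewrite !exprMn real_normK ?num_real // /d; ring.
    have n1 : 0 <= 4 * c0 * `|theta j - theta i0|.
      by apply: mulr_ge0; [apply: mulr_ge0; lra | apply: normr_ge0].
    have n2 : 0 <= B by lra.
    by apply: lerXn2r; rewrite ?nnegrE.
  have [Dl0 Dlj] := andP (@Delta_bounds R K theta i0 j ji).
  rewrite -/Dl in Dl0 Dlj.
  have yv : c0 ^+ 2 * Dl ^+ 2 * t%:R <= c0 ^+ 2 * d * t%:R.
    apply: ler_wpM2r; first lra.
    apply: ler_wpM2l; first exact: sqr_ge0.
    rewrite /d -(real_normK (num_real (theta j - theta i0))).
    by apply: lerXn2r; rewrite ?nnegrE //; apply: normr_ge0.
  have y0 : 0 <= c0 ^+ 2 * Dl ^+ 2 * t%:R.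
    by apply: mulr_ge0; [apply: mulr_ge0; apply: sqr_ge0 | lra].
  have c0' : 0 <= P0 j / P0 i0 by apply: divr_ge0; apply: ltW.
  have := @core R d (P0 j / P0 i0) (a j) c0 t%:R K%:R B (kappa theta i0) (c0 ^+ 2 * Dl ^+ 2 * t%:R)
    (rho ^+ t) c00 c01 tr Kr d0 (dk j) Z1 hB y0 yv c0' a0 ac acr (exprn_ge0 _ rho0) rt.
  by rewrite -/eps -/A; lra.
rewrite big_split /= -mulr_suml.
have -> : \sum_(j < K | j != i0) P0 j / P0 i0 = (1 - P0 i0) / P0 i0.
  by rewrite -mulr_suml; congr (_ * _); have := P0s; rewrite (bigD1 i0) //=; lra.
apply: lerD; first by [].
apply: (@le_trans _ _ (\sum_(j < K) 1 / (K%:R * t%:R ^+ 2))).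
  rewrite [X in _ <= X](bigD1 i0) //= lerDr; apply: divr_ge0; lra.
rewrite sumr_const card_ord -mulr_natl.
rewrite le_eqVlt; apply/orP; left; apply/eqP; field.
by apply/andP; split; apply/lt0r_neq0; lra.
Qed.
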